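(* Let $V$ be a finite-dimensional super vector space over a field of characteristic $0$, let $W\subseteq V$ be a graded subspace, $D=W^0=\{X\in\mathfrak{gl}(V):X(w)=0\ \forall w\in W\}$ (so that $D^0=W$), and let $\pi:V\to\mathfrak{gl}(V)$ be an even, super skew-symmetric linear map; write $\pi(x,y)=\pi(x)(y)$. Let $L=\{X+\pi(x)+x: X\in D,\ x\in D^0\}\subseteq\mathfrak{gl}(V)\oplus V$. Then $L$ is a Dirac structure if and only if: (1) $D$ is a Lie sub-superalgebra of $\mathfrak{gl}(V)$; (2) $\pi(\pi(x,y))-[\pi(x),\pi(y)]\in D$ for all $x,y\in D^0$; (3) $\pi(x,y)\in D^0$ for all $x,y\in D^0$.
   Context: $\mathfrak{gl}(V)$: linear endomorphisms of $V$ with natural $\mathbb{Z}_2$-grading and supercommutator $[A,B]=AB-(-1)^{|A||B|}BA$. $\mathcal{E}=\mathfrak{gl}(V)\oplus V$ graded by $\mathcal{E}_\alpha=\mathfrak{gl}(V)_\alpha\oplus V_\alpha$, homogeneous elements $A+x$ with $|A|=|x|$. Bracket: $[\![A+x,B+y]\!]=[A,B]+\tfrac12(Ay-(-1)^{|x||y|}Bx)$; $V$-valued pairing: $\langle A+x,B+y\rangle=\tfrac12(Ay+(-1)^{|x||y|}Bx)$. $F^\perp=\{e:\langle e,f\rangle=0\ \forall f\in F\}$. For $D\subseteq\mathfrak{gl}(V)$, $D^0=\{x\in V: X(x)=0\ \forall X\in D\}$. Super skew-symmetric: $\pi(x)(y)=-(-1)^{|x||y|}\pi(y)(x)$ for homogeneous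 $x,y$. A Dirac structure is a graded subspace $L\subseteq\mathcal{E}$ with $L=L^\perp$ and $[\![L,L]\!]\subseteq L$. *)

(* Defs.v *)
From HB Require Import structures.
From mathcomp Require Import all_boot all_order all_algebra.
Set Implicit Arguments. Unset Strict Implicit. Unset Printing Implicit Defensive.
Import Order.TTheory GRing.Theory Num.Theory.
Local Open Scope ring_scope.

(* Model: the super vector space V = V_0 (+) V_1 with dim V_0 = m, dim V_1 = n,
   realised as column vectors 'cV[F]_(m+n); coordinate i is odd iff m <= i.
   gl(V) = 'M[F]_(m+n) acting on the left; parity of entry (i,j) is
   parity(i) xor parity(j).  Parity index: false = even (0), true = odd (1). *)

Section Super.
Variables (F : fieldType) (m n : nat).
Local Notation V := 'cV[F]_(m + n).
Local Notation M := 'M[F]_(m + n).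

Definition oddi (i : 'I_(m + n)) : bool := (m <= i)%N.

Definition vpar (b : bool) (x : V) : V :=
  \col_i (if oddi i == b then x i 0 else 0).
Definition mpar (b : bool) (A : M) : M :=
  \matrix_(i, j) (if (oddi i != oddi j) == b then A i j else 0).

Definition sgn (a b : bool) : F := (-1) ^+ (a && b).

Definition sbr (A B : M) : M :=
  \sum_(a : bool) \sum_(b : bool)
     (mpar a A *m mpar b B - sgn a b *: (mpar b B *m mpar a A)).

Definition epar (a : bool) (e : M * V) : M * V := (mpar a e.1, vpar a e.2).

Definition brE (e f : M * V) : M * V :=
  (sbr e.1 f.1,
   \sum_(a : bool) \sum_(b : bool)
     2^-1 *: (mpar a e.1 *m vpar b f.2 - sgn a b *: (mpar b f.1 *m vpar a e.2))).

Definition pairE (e f : M * V) : V :=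
  \sum_(a : bool) \sum_(b : bool)
     2^-1 *: (mpar a e.1 *m vpar b f.2 + sgn a b *: (mpar b f.1 *m vpar a e.2)).

Definition subspace (T : lmodType F) (S : T -> Prop) : Prop :=
  S 0 /\ forall (c : F) u v, S u -> S v -> S (c *: u + v).

Definition graded_subspaceV (S : V -> Prop) : Prop :=
  subspace S /\ forall b x, S x -> S (vpar b x).
Definition graded_subspaceM (S : M -> Prop) : Prop :=
  subspace S /\ forall b A, S A -> S (mpar b A).
Definition graded_subspaceE (S : M * V -> Prop) : Prop :=
  [/\ S (0, 0),
      (forall (c : F) u v, S u -> S v -> S (c *: u.1 + v.1, c *: u.2 + v.2))
    & forall b e, S e -> S (epar b e)].

Definition perpE (S : M * V -> Prop) (e : M * V) : Prop :=
  forall f, S f -> pairE e f = 0.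

Definition dirac (L : M * V -> Prop) : Prop :=
  [/\ graded_subspaceE L,
      (forall e, L e <-> perpE L e)
    & forall e f, L e -> L f -> L (brE e f)].

Definition annV (W : V -> Prop) (X : M) : Prop := forall w, W w -> X *m w = 0.
Definition annM (D : M -> Prop) (x : V) : Prop := forall X, D X -> X *m x = 0.

Definition lie_subsuperalg (D : M -> Prop) : Prop :=
  graded_subspaceM D /\ forall A B, D A -> D B -> D (sbr A B).

Definition even_map (pi : V -> M) : Prop :=
  forall b x, vpar b x = x -> mpar b (pi x) = pi x.
Definition super_skew (pi : V -> M) : Prop :=
  forall a b x y, vpar a x = x -> vpar b y = y ->
    pi x *m y = - (sgn a b *: (pi y *m x)).

Definition Lset (D : M -> Prop) (pi : V -> M) (e : M * V) : Prop :=
  exists X x, [/\ D X, annM D x & e = (X + pi x, x)].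

End Super.

(* Main.v *)
Require Import Defs.
From HB Require Import structures.
From mathcomp Require Import all_boot all_order all_algebra.
Import Order.TTheory GRing.Theory Num.Theory.
Local Open Scope ring_scope.

Lemma two_neq0 (F : fieldType) : [pchar F] =i pred0 -> (2%:R : F) != 0.
Proof. by move=> H; rewrite ((pcharf0P F).1 H 2). Qed.

Lemma vpar_sum (F : fieldType) m n (x : 'cV[F]_(m+n)) : \sum_b vpar b x = x.
Proof.
rewrite big_bool; apply/matrixP => i j; rewrite !mxE.
by rewrite (ord1 j); case: (oddi i) => /=; rewrite ?addr0 ?add0r.
Qed.

Lemma mpar_sum (F : fieldType) m n (A : 'M[F]_(m+n)) : \sum_b mpar b A = A.
Proof.
rewrite big_bool; apply/matrixP => i j; rewrite !mxE.
by case: (oddi i (m:=m) (n:=n)); case: (oddi j (m:=m) (n:=n)) => /=; rewrite ?addr0 ?add0r.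
Qed.

Lemma vpar_lin (F : fieldType) m n b (c : F) (x y : 'cV[F]_(m+n)) :
  vpar b (c *: x + y) = c *: vpar b x + vpar b y.
Proof.
apply/matrixP => i j; rewrite !mxE; case: ifP => _ //.
by rewrite mulr0 addr0.
Qed.

Lemma mpar_lin (F : fieldType) m n b (c : F) (x y : 'M[F]_(m+n)) :
  mpar b (c *: x + y) = c *: mpar b x + mpar b y.
Proof.
apply/matrixP => i j; rewrite !mxE; case: ifP => _ //.
by rewrite mulr0 addr0.
Qed.

HB.instance Definition _ (F : fieldType) m n b :=
  GRing.isLinear.Build F 'cV[F]_(m+n) 'cV[F]_(m+n) *:%R (@vpar F m n b)
    (@vpar_lin F m n b).
HB.instance Definition _ (F : fieldType) m n b :=
  GRing.isLinear.Build F 'M[F]_(m+n) 'M[F]_(m+n) *:%R (@mpar F m n b)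
    (@mpar_lin F m n b).

Lemma vparK (F : fieldType) m n a b (x : 'cV[F]_(m+n)) :
  vpar a (vpar b x) = if a == b then vpar b x else 0.
Proof.
case: a; case: b => /=; apply/matrixP => i j; rewrite !mxE ?(ord1 j);
by case: (oddi i).
Qed.

Lemma mparK (F : fieldType) m n a b (x : 'M[F]_(m+n)) :
  mpar a (mpar b x) = if a == b then mpar b x else 0.
Proof.
case: a; case: b => /=; apply/matrixP => i j; rewrite !mxE;
by case: (oddi i (m:=m) (n:=n)); case: (oddi j (m:=m) (n:=n)).
Qed.

Lemma L1 (F : fieldType) m n a b (A : 'M[F]_(m+n)) (x : 'cV[F]_(m+n)) :
  mpar a A *m vpar b x = vpar (a (+) b) (mpar a A *m x).
Proof.
apply/matrixP => i k; rewrite !mxE; case: ifP => Hi.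
  apply: eq_bigr => j _; rewrite !mxE.
  by move: Hi; case: (oddi i); case: (oddi j); case: a; case: b => //= _; rewrite ?mulr0 ?mul0r.
rewrite big1 // => j _; rewrite !mxE.
by move: Hi; case: (oddi i); case: (oddi j); case: a; case: b => //= _; rewrite ?mulr0 ?mul0r.
Qed.

Lemma L3 (F : fieldType) m n a b (A : 'M[F]_(m+n)) (x : 'cV[F]_(m+n)) :
  mpar a A *m vpar b x = vpar (a (+) b) (A *m vpar b x).
Proof.
apply/matrixP => i k; rewrite !mxE; case: ifP => Hi.
  apply: eq_bigr => j _; rewrite !mxE.
  by move: Hi; case: (oddi i); case: (oddi j); case: a; case: b => //= _; rewrite ?mulr0 ?mul0r.
rewrite big1 // => j _; rewrite !mxE.
by move: Hi; case: (oddi i); case: (oddi j); case: a; case: b => //= _; rewrite ?mulr0 ?mul0r.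
Qed.

Lemma vpar_eq0 (F : fieldType) m n (x : 'cV[F]_(m+n)) :
  (forall d, vpar d x = 0) -> x = 0.
Proof. by move=> H; rewrite -[x]vpar_sum big_bool !H; apply: addr0. Qed.

Lemma sgnK (F : fieldType) a b : sgn F a b * sgn F a b = 1.
Proof. by case: a; case: b; rewrite /sgn /= ?expr1 ?expr0 ?mulr1 ?mulrNN ?mulr1. Qed.
Definition Tm {F : fieldType} {m n} (B : 'M[F]_(m+n)) (x : 'cV[F]_(m+n)) :=
  \sum_a \sum_b sgn F a b *: (mpar b B *m vpar a x).

Lemma sum_mv (F : fieldType) m n (A : 'M[F]_(m+n)) (x : 'cV[F]_(m+n)) :
  \sum_a \sum_b (mpar a A *m vpar b x) = A *m x.
Proof.
under eq_bigr => a _ do rewrite -mulmx_sumr vpar_sum.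
by rewrite -mulmx_suml mpar_sum.
Qed.

Lemma pairE_eq (F : fieldType) m n (e f : 'M[F]_(m+n) * 'cV[F]_(m+n)) :
  pairE e f = 2^-1 *: (e.1 *m f.2 + Tm f.1 e.2).
Proof.
rewrite /pairE /Tm.
under eq_bigr => a _ do rewrite -scaler_sumr big_split /=.
by rewrite -scaler_sumr big_split /= sum_mv.
Qed.

Lemma brE_eq (F : fieldType) m n (e f : 'M[F]_(m+n) * 'cV[F]_(m+n)) :
  brE e f = (sbr e.1 f.1, 2^-1 *: (e.1 *m f.2 - Tm f.1 e.2)).
Proof.
rewrite /brE /Tm; congr (_, _).
under eq_bigr => a _ do rewrite -scaler_sumr sumrB /=.
by rewrite -scaler_sumr sumrB /= sum_mv.
Qed.

Lemma TmD (F : fieldType) m n (B B' : 'M[F]_(m+n)) x :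
  Tm (B + B') x = Tm B x + Tm B' x.
Proof.
rewrite /Tm -big_split; apply: eq_bigr => a _; rewrite -big_split.
by apply: eq_bigr => b _; rewrite linearD /= mulmxDl scalerDr.
Qed.

Lemma Tm0 (F : fieldType) m n (B : 'M[F]_(m+n)) : Tm B 0 = 0.
Proof.
rewrite /Tm big1 // => a _; rewrite big1 // => b _.
by rewrite linear0 mulmx0 scaler0.
Qed.

Lemma pi_par (F : fieldType) m n (pi : {linear 'cV[F]_(m + n) -> 'M[F]_(m + n)}) :
  even_map pi -> forall b x, mpar b (pi x) = pi (vpar b x).
Proof.
move=> Hev b x.
rewrite -{1}[x]vpar_sum linear_sum linear_sum big_bool /=.
have Ht := Hev true (vpar true x) ltac:(by rewrite vparK).
have Hf := Hev false (vpar false x) ltac:(by rewrite vparK).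
by rewrite -Hf -Ht; case: b; rewrite !mparK /= ?addr0 ?add0r.
Qed.

Lemma sgnC (F : fieldType) a b : sgn F a b = sgn F b a.
Proof. by rewrite /sgn andbC. Qed.

Lemma Tm_pi (F : fieldType) m n (pi : {linear 'cV[F]_(m + n) -> 'M[F]_(m + n)}) :
  even_map pi -> super_skew pi -> forall x y, Tm (pi y) x = - (pi x *m y).
Proof.
move=> Hev Hsk x y; rewrite /Tm.
have E: forall a b, sgn F a b *: (mpar b (pi y) *m vpar a x) =
                  - (pi (vpar a x) *m vpar b y).
  move=> a b; rewrite pi_par //.
  rewrite (Hsk b a (vpar b y) (vpar a x)) ?vparK ?eqxx //.
  by rewrite scalerN scalerA sgnC sgnK scale1r.
under eq_bigr => a _ do under eq_bigr => b _ do rewrite E.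
under eq_bigr => a _ do rewrite sumrN -mulmx_sumr vpar_sum.
by rewrite sumrN -mulmx_suml -linear_sum vpar_sum.
Qed.

Lemma annV_graded {F : fieldType} {m n} (W : 'cV[F]_(m + n) -> Prop) :
  graded_subspaceV W -> forall b X, annV W X -> annV W (mpar b X).
Proof.
move=> [_ HW] b X HX w Ww.
rewrite -[w]vpar_sum mulmx_sumr big1 // => c _.
by rewrite L3 HX ?linear0 //; apply: HW.
Qed.

Lemma annM_graded (F : fieldType) m n (D : 'M[F]_(m + n) -> Prop) :
  (forall b X, D X -> D (mpar b X)) ->
  forall b x, annM D x -> annM D (vpar b x).
Proof.
move=> HD b x Hx Z HZ.
rewrite -[Z]mpar_sum mulmx_suml big1 // => c _.
by rewrite L1 Hx ?linear0 //; apply: HD.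
Qed.

Lemma Tm_D0 (F : fieldType) m n (D : 'M[F]_(m + n) -> Prop) :
  (forall b X, D X -> D (mpar b X)) ->
  forall Y x, D Y -> annM D x -> Tm Y x = 0.
Proof.
move=> HD Y x HY Hx; rewrite /Tm big1 // => a _; rewrite big1 // => b _.
by rewrite L1 Hx ?linear0 ?scaler0 //; apply: HD.
Qed.

Lemma sgn_neq0 (F : fieldType) a b : sgn F a b != 0.
Proof. by case: a; case: b; rewrite /sgn /= ?expr1 ?expr0 ?oppr_eq0 oner_eq0. Qed.

Lemma Tm_hom (F : fieldType) m n c (Y : 'M[F]_(m + n)) z :
  Tm (mpar c Y) z = \sum_a sgn F a c *: (mpar c Y *m vpar a z).
Proof.
rewrite /Tm; apply: eq_bigr => a _.
rewrite big_bool; case: c; rewrite !mparK /= ?linear0 ?mul0mx ?scaler0 ?addr0 ?add0r //.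
Qed.

Lemma Tm_D_inv (F : fieldType) m n (D : 'M[F]_(m + n) -> Prop) :
  (forall b X, D X -> D (mpar b X)) ->
  forall z, (forall Y, D Y -> Tm Y z = 0) -> annM D z.
Proof.
move=> HD z H Y HY.
rewrite -[Y]mpar_sum mulmx_suml big1 // => c _.
have := H _ (HD c Y HY); rewrite Tm_hom => E.
apply: vpar_eq0 => d.
have := congr1 (vpar d) E; rewrite linear_sum linear0 big_bool /= !linearZ /=.
rewrite !L1 !vparK.
move: E => _; case: c; case: d => /=; rewrite ?scaler0 ?addr0 ?add0r => /eqP;
  by rewrite scaler_eq0 (negbTE (sgn_neq0 _ _ _)) /= => /eqP.
Qed.

Lemma sbrDl (F : fieldType) m n (A A' B : 'M[F]_(m + n)) :
  sbr (A + A') B = sbr A B + sbr A' B.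
Proof.
rewrite /sbr -big_split; apply: eq_bigr => a _; rewrite -big_split.
apply: eq_bigr => b _ /=.
by rewrite linearD /= mulmxDl mulmxDr scalerDr opprD addrACA.
Qed.

Lemma sbrDr (F : fieldType) m n (A B B' : 'M[F]_(m + n)) :
  sbr A (B + B') = sbr A B + sbr A B'.
Proof.
rewrite /sbr -big_split; apply: eq_bigr => a _; rewrite -big_split.
apply: eq_bigr => b _ /=.
by rewrite linearD /= mulmxDl mulmxDr scalerDr opprD addrACA.
Qed.

Lemma sbr_cross (F : fieldType) m n (W : 'cV[F]_(m + n) -> Prop)
  (pi : {linear 'cV[F]_(m + n) -> 'M[F]_(m + n)}) :
  graded_subspaceV W -> even_map pi ->
  (forall x y, annM (annV W) x -> annM (annV W) y -> annM (annV W) (pi x *m y)) ->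
  forall X y, annV W X -> annM (annV W) y ->
    annV W (sbr X (pi y)) /\ annV W (sbr (pi y) X).
Proof.
move=> HW Hev H3 X y HX Hy.
have HDg := annV_graded _ HW.
have HWD : forall w, W w -> annM (annV W) w by move=> w Ww Z HZ; apply: HZ.
split=> w Ww; rewrite /sbr mulmx_suml big1 // => a _;
  rewrite mulmx_suml big1 // => b _; rewrite mulmxBl -!mulmxA -!scalemxAl -!mulmxA;
  rewrite !pi_par //.
- rewrite (HDg a X HX w Ww) mulmx0 scaler0 subr0.
  apply: (H3 _ _ (@annM_graded F m n (annV W) HDg _ y Hy) (HWD _ Ww)).
  exact: HDg.
- rewrite (HDg b X HX w Ww) mulmx0 sub0r.
  rewrite (_ : mpar b X *m _ = 0) ?scaler0 ?oppr0 //.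
  apply: (H3 _ _ (@annM_graded F m n (annV W) HDg _ y Hy) (HWD _ Ww)).
  exact: HDg.
Qed.

Theorem mainTheorem5 (F : fieldType) (m n : nat)
  (W : 'cV[F]_(m + n) -> Prop)
  (pi : {linear 'cV[F]_(m + n) -> 'M[F]_(m + n)}) :
  [pchar F] =i pred0 ->
  graded_subspaceV W ->
  even_map pi ->
  super_skew pi ->
  let D := annV W in
  dirac (Lset D pi) <->
  [/\ lie_subsuperalg D,
      (forall x y, annM D x -> annM D y ->
         D (pi (pi x *m y) - sbr (pi x) (pi y)))
    & (forall x y, annM D x -> annM D y -> annM D (pi x *m y))].
Proof.
move=> Hc HW Hev Hsk D.
have H2 : (2%:R : F) != 0 := two_neq0 _ Hc.
have HDg : forall b X, D X -> D (mpar b X) := annV_graded _ HW.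
have HD0g : forall b x, annM D x -> annM D (vpar b x) := @annM_graded F m n D HDg.
have HWD : forall w, W w -> annM D w by move=> w Ww Z HZ; apply: HZ.
have D0 : D 0 by move=> w _; rewrite mul0mx.
have DD : forall c X Y, D X -> D Y -> D (c *: X + Y).
  by move=> c X Y HX HY w Ww; rewrite mulmxDl -scalemxAl HX // HY // scaler0 addr0.
have DN : forall X, D X -> D (- X).
  by move=> X HX w Ww; rewrite mulNmx HX // oppr0.
have A0 : annM D 0 by move=> Z _; rewrite mulmx0.
have AD : forall c x y, annM D x -> annM D y -> annM D (c *: x + y).
  by move=> c x y Hx Hy Z HZ; rewrite mulmxDr -scalemxAr Hx // Hy // scaler0 addr0.
have half2 : forall v : 'cV[F]_(m+n), 2^-1 *: (v + v) = v.
  by move=> v; rewrite -mulr2n -scaler_nat scalerA mulVf // scale1r.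
have brL : forall X x Y y, D X -> annM D x -> D Y -> annM D y ->
    brE (X + pi x, x) (Y + pi y, y) = (sbr (X + pi x) (Y + pi y), pi x *m y).
  move=> X x Y y HX Hx HY Hy; rewrite brE_eq /=; congr (_, _).
  rewrite TmD (@Tm_D0 F m n D HDg _ _ HY Hx) (@Tm_pi F m n pi Hev Hsk) add0r opprK mulmxDl.
  by rewrite (Hy X HX) add0r half2.
have LXx : forall X x, D X -> annM D x -> Lset D pi (X + pi x, x).
  by move=> X x HX Hx; exists X, x.
split.
- case=> _ _ Hbr; split.
  + split; first by split; [split|].
    move=> X Y HX HY.
    have := Hbr _ _ (LXx X 0 HX A0) (LXx Y 0 HY A0).
    rewrite (brL X 0 Y 0 HX A0 HY A0) => -[Z [z [HZ Hz E]]]; case: E => E1 E2.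
    move: E1; rewrite -E2 mulmx0 !linear0 !addr0 => ->; exact: HZ.
  + move=> x y Hx Hy.
    have := Hbr _ _ (LXx 0 x D0 Hx) (LXx 0 y D0 Hy).
    rewrite (brL 0 x 0 y D0 Hx D0 Hy) => -[Z [z [HZ Hz E]]]; case: E => E1 E2.
    move: E1; rewrite -E2 !add0r => ->.
    by rewrite opprD addrCA subrr addr0; apply: DN.
  + move=> x y Hx Hy.
    have := Hbr _ _ (LXx 0 x D0 Hx) (LXx 0 y D0 Hy).
    rewrite (brL 0 x 0 y D0 Hx D0 Hy) => -[Z [z [HZ Hz E]]]; case: E => E1 ->.
    exact: Hz.
- case=> [[[[HD0 HDc] _] Hsbr] H2c H3].
  split.
  + split.
    * by exists 0, 0; rewrite linear0 addr0.
    * move=> c u v [X [x [HX Hx ->]]] [Y [y [HY Hy ->]]] /=.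
      exists (c *: X + Y), (c *: x + y); split; [exact: DD|exact: AD|].
      by rewrite linearP /= scalerDr addrACA.
    * move=> b e [X [x [HX Hx ->]]]; rewrite /epar /=.
      exists (mpar b X), (vpar b x); split; [exact: HDg|exact: HD0g|].
      by rewrite linearD /= (@pi_par F m n pi Hev).
  +
    have pairL : forall A z Y y, annM D z -> D Y -> annM D y ->
        pairE (A, z) (Y + pi y, y) = 2^-1 *: (A *m y - pi z *m y).
      move=> A z Y y Hz HY Hy; rewrite pairE_eq /=.
      by rewrite TmD (@Tm_D0 F m n D HDg _ _ HY Hz) (@Tm_pi F m n pi Hev Hsk) add0r.
    move=> e; split.
    * move=> [X [x [HX Hx ->]]] f [Y [y [HY Hy ->]]].
      by rewrite pairL // mulmxDl addrK (Hy X HX) scaler0.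
    * case: e => A z Hp.
      have Hz : annM D z.
        apply: (@Tm_D_inv F m n D HDg) => Y HY.
        have := Hp _ (LXx Y 0 HY A0); rewrite pairE_eq /= mulmx0 linear0 addr0 add0r.
        by move/eqP; rewrite scaler_eq0 invr_eq0 (negbTE H2) /= => /eqP.
      exists (A - pi z), z; split => //; last by rewrite subrK.
      move=> w Ww.
      have := Hp _ (LXx 0 w D0 (HWD w Ww)); rewrite (pairL A z 0 w Hz D0 (HWD w Ww)).
      by move/eqP; rewrite scaler_eq0 invr_eq0 (negbTE H2) /= mulmxBl => /eqP.
  + move=> e f [X [x [HX Hx ->]]] [Y [y [HY Hy ->]]].
    rewrite (brL X x Y y HX Hx HY Hy).
    exists (sbr (X + pi x) (Y + pi y) - pi (pi x *m y)), (pi x *m y).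
    split; [|exact: H3|by rewrite subrK].
    have [C1 _] := @sbr_cross F m n W pi HW Hev H3 _ _ HX Hy.
    have [_ C2] := @sbr_cross F m n W pi HW Hev H3 _ _ HY Hx.
    move=> w Ww.
    rewrite sbrDl !sbrDr mulmxBl !mulmxDl (Hsbr _ _ HX HY w Ww) (C1 w Ww) (C2 w Ww).
    have := H2c x y Hx Hy w Ww; rewrite mulmxBl => /eqP; rewrite subr_eq0 => /eqP ->.
    by rewrite !add0r subrr.
Qed.
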